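(* Let $q$ be a prime power, $m\ge2$, $s,\ell,r_1,\dots,r_m\ge1$ integers, $k=m\ell-s$ with $k\ge\ell$, $n=\sum_{i=1}^m(\ell+r_i)$ and $R=\sum_{i=1}^m r_i$. Let $\bar{\mathbb{F}}_q$ be the algebraic closure of $\mathbb{F}_q$. For $(\alpha,\beta)\in\bar{\mathbb{F}}_q^{sk}\times\bar{\mathbb{F}}_q^{\ell R}$, with $\alpha=(\alpha_{w,z})_{1\le w\le k,1\le z\le s}$ and $\beta=(\beta_{t,i,j})_{1\le t\le\ell,1\le i\le m,1\le j\le r_i}$, let $G(\alpha,\beta)\in\bar{\mathbb{F}}_q^{k\times n}$ be the matrix $(C_1\mid D_1\mid C_2\mid D_2\mid\dots\mid C_m\mid D_m)$ where $(C_1\mid\dots\mid C_m)=[I_k\mid A]$ with $A=(\alpha_{w,z})\in\bar{\mathbb{F}}_q^{k\times s}$, each $C_i$ has $\ell$ columns, and $D_i\in\bar{\mathbb{F}}_q^{k\times r_i}$ has $j$-th column $\sum_{t=1}^{\ell}\beta_{t,i,j}C_i^{(t)}$, where $C_i^{(t)}$ is the $t$-th column of $C_i$. Then the set $$\mathcal A_{\mathrm{PMDS}}=\{(\alpha,\beta)\in\bar{\mathbb{F}}_q^{sk}\times\bar{\mathbb{F}}_q^{\ell R}\mid \text{the row space of }G(\alpha,\beta)\text{ is an }[n,k,\ell;r_1,\dots,r_m]\text{-PMDS code}\}$$ is a generic set, i.e. it contains a non-empty Zariski-open subset of $\bar{\mathbb{F}}_q^{sk+\ell R}$.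
   Context: The Zariski topology on $\bar{\mathbb{F}}^N$ has as closed sets the common zero sets in $\bar{\mathbb{F}}^N$ of sets of polynomials. An $[n,k]$-MDS code over a field $\mathbb{F}$ is a linear code in $\mathbb{F}^n$ of dimension $k$ and minimum Hamming distance $n-k+1$. PMDS codes: let $\ell,m,r_1,\dots,r_m$ be positive integers, $n=\sum_{i=1}^m(r_i+\ell)$, and $C\subseteq\mathbb{F}^n$ a linear code of dimension $k<n$ with generator matrix $G=(B_1\mid\dots\mid B_m)$, $B_i\in\mathbb{F}^{k\times(r_i+\ell)}$ (here $B_i=(C_i\mid D_i)$). Then $C$ is an $[n,k,\ell;r_1,\dots,r_m]$-PMDS code if (i) for each $i$ the row space of $B_i$ is an $[r_i+\ell,\ell]$-MDS code, and (ii) for any choice of $r_i$ erased coordinates in the $i$-th block for every $i$, the code obtained from $C$ by puncturing these coordinates is an $[m\ell,k]$-MDS code. *)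

(* Defs.v *)
From HB Require Import structures.
From mathcomp Require Import all_boot all_order all_algebra.
From mathcomp Require Import mpoly.
Set Implicit Arguments. Unset Strict Implicit. Unset Printing Implicit Defensive.
Import GRing.Theory.
Local Open Scope ring_scope.

Definition algebraic_over_prime (K : fieldType) (x : K) : Prop :=
  exists P : {poly K}, P != 0 /\ (forall i, exists c : nat, P`_i = c%:R) /\ root P x.

(* V(S) = common zero set of a set S of polynomials; open = complement of some V(S). *)
Definition zariski_open (K : fieldType) (N : nat) (U : ('I_N -> K) -> Prop) : Prop :=
  exists S : {mpoly K[N]} -> Prop,
    forall x, U x <-> exists f, S f /\ f.@[x] != 0.

Definition generic_set (K : fieldType) (N : nat) (A : ('I_N -> K) -> Prop) : Prop :=
  exists U : ('I_N -> K) -> Prop,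
    zariski_open U /\ (exists x, U x) /\ (forall x, U x -> A x).

Definition wt (K : fieldType) (n : nat) (c : 'rV[K]_n) : nat := #|[set j | c 0 j != 0]|.

Definition has_mindist (K : fieldType) (a n : nat) (M : 'M[K]_(a, n)) (d : nat) : Prop :=
  (exists c : 'rV[K]_n, (c <= M)%MS /\ c != 0 /\ wt c = d) /\
  (forall c : 'rV[K]_n, (c <= M)%MS -> c != 0 -> (d <= wt c)%N).

Definition is_MDS (K : fieldType) (a n : nat) (M : 'M[K]_(a, n)) (len kk : nat) : Prop :=
  \rank M = kk /\ has_mindist M (len - kk + 1).

(* zero out the coordinates outside S (= puncturing the coordinates not in S,
   up to padding with identically-zero coordinates) *)
Definition keep_cols (K : fieldType) (a n : nat) (S : {set 'I_n}) (M : 'M[K]_(a, n))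
  : 'M[K]_(a, n) := \matrix_(i, j) (if j \in S then M i j else 0).

Definition is_PMDS (K : fieldType) (m l k : nat) (r : 'I_m -> nat)
  (G : 'M[K]_(k, \sum_(i < m) (l + r i))) : Prop :=
  [/\ \rank G = k, (k < \sum_(i < m) (l + r i))%N,
      (forall i : 'I_m, is_MDS (submxrow G i) (l + r i) l) &
      (forall E : forall i : 'I_m, {set 'I_(l + r i)},
         (forall i, #|E i| = r i) ->
         is_MDS (\mxrow_(i < m) keep_cols (~: E i) (submxrow G i)) (m * l) k)].

Section Gmat.
Variables (K : fieldType) (m l s k : nat) (r : 'I_m -> nat).

(* entry (w, c) of [I_k | A], c a natural number index (0 outside range) *)
Definition Pent (alpha : 'M[K]_(k, s)) (w : 'I_k) (c : nat) : K :=
  if insub c is Some c' then (row_mx 1%:M alpha : 'M[K]_(k, k + s)) w c' else 0.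

(* C_i : columns i*l, ..., i*l + l - 1 of [I_k | A]  (0-indexed blocks) *)
Definition Cblk (alpha : 'M[K]_(k, s)) (i : 'I_m) : 'M[K]_(k, l) :=
  \matrix_(w, t) Pent alpha w (i * l + t).

(* beta is an l x R matrix, R = sum r_i; its i-th column block is
   (beta_{t,i,j})_{t,j} *)
Definition Dblk (alpha : 'M[K]_(k, s)) (beta : 'M[K]_(l, \sum_(i < m) r i)) (i : 'I_m)
  : 'M[K]_(k, r i) :=
  \matrix_(w, j) \sum_(t < l) submxrow beta i t j * Cblk alpha i w t.

Definition Gmat (alpha : 'M[K]_(k, s)) (beta : 'M[K]_(l, \sum_(i < m) r i))
  : 'M[K]_(k, \sum_(i < m) (l + r i)) :=
  \mxrow_(i < m) row_mx (Cblk alpha i) (Dblk alpha beta i).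

(* coordinates of K^(sk + lR): first the entries of alpha, then those of beta *)
Definition alpha_of (x : 'I_(k * s + l * \sum_(i < m) r i) -> K) : 'M[K]_(k, s) :=
  vec_mx (lsubmx (\row_j x j)).
Definition beta_of (x : 'I_(k * s + l * \sum_(i < m) r i) -> K)
  : 'M[K]_(l, \sum_(i < m) r i) :=
  vec_mx (rsubmx (\row_j x j)).

Definition A_PMDS (x : 'I_(k * s + l * \sum_(i < m) r i) -> K) : Prop :=
  @is_PMDS K m l k r (Gmat (alpha_of x) (beta_of x)).
End Gmat.

(* Main.v *)
Require Import Defs.
From HB Require Import structures.
From mathcomp Require Import all_boot all_order all_algebra all_fingroup.
From mathcomp Require Import mpoly.
From mathcomp Require Import zify.
Set Implicit Arguments. Unset Strict Implicit. Unset Printing Implicit Defensive.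
Import GRing.Theory.
Local Open Scope ring_scope.

Section GmatRing.
Variables (R : comNzRingType) (m l s k : nat) (r : 'I_m -> nat).

Definition PentR (alpha : 'M[R]_(k, s)) (w : 'I_k) (c : nat) : R :=
  if insub c is Some c' then (row_mx 1%:M alpha : 'M[R]_(k, k + s)) w c' else 0.
Definition CblkR (alpha : 'M[R]_(k, s)) (i : 'I_m) : 'M[R]_(k, l) :=
  \matrix_(w, t) PentR alpha w (i * l + t).
Definition DblkR (alpha : 'M[R]_(k, s)) (beta : 'M[R]_(l, \sum_(i < m) r i)) (i : 'I_m)
  : 'M[R]_(k, r i) :=
  \matrix_(w, j) \sum_(t < l) submxrow beta i t j * CblkR alpha i w t.
Definition GmatR (alpha : 'M[R]_(k, s)) (beta : 'M[R]_(l, \sum_(i < m) r i))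
  : 'M[R]_(k, \sum_(i < m) (l + r i)) :=
  \mxrow_(i < m) row_mx (CblkR alpha i) (DblkR alpha beta i).
End GmatRing.

Lemma GmatE (K : fieldType) m l s k (r : 'I_m -> nat) a b :
  @Gmat K m l s k r a b = @GmatR K m l s k r a b.
Proof. by []. Qed.

Lemma map_GmatR (R S : comNzRingType) (phi : {rmorphism R -> S}) m l s k
  (r : 'I_m -> nat) a b :
  map_mx phi (@GmatR R m l s k r a b) = @GmatR S m l s k r (map_mx phi a) (map_mx phi b).
Proof.
have HP w c : phi (PentR a w c) = PentR (map_mx phi a) w c.
  rewrite /PentR; case: insub => [c'|]; last by rewrite rmorph0.
  by rewrite -(rmorph1 phi) -map_scalar_mx -map_row_mx [RHS]mxE.
apply/matrixP => w c; rewrite !mxE.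
case: splitP => j _; rewrite !mxE ?HP //.
rewrite rmorph_sum; apply: eq_bigr => t _; rewrite rmorphM !mxE HP //.
Qed.

Lemma exists_nonroot (K : closedFieldType) (u : {poly K}) :
  u != 0 -> exists t, u.[t] != 0.
Proof.
move=> u0.
have : size (u * 'X - 1) != 1%N.
  rewrite size_addl ?size_mulX //; first by rewrite eqSS size_poly_eq0.
  by rewrite size_polyN size_poly1 ltnS lt0n size_poly_eq0.
case/closed_rootP => t; rewrite /root !hornerE => /eqP H; exists t.
apply/eqP => H1; move: H; rewrite H1 mul0r sub0r => /eqP; rewrite oppr_eq0 oner_eq0.
by [].
Qed.

Lemma map_colsub (R S : pzRingType) (phi : R -> S) a b b' (g : 'I_b' -> 'I_b)
  (A : 'M[R]_(a, b)) : map_mx phi (colsub g A) = colsub g (map_mx phi A).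
Proof. by apply/matrixP => i j; rewrite !mxE. Qed.

Section Line.
Variable K : closedFieldType.

Definition lineM a b (A0 A1 : 'M[K]_(a, b)) : 'M[{poly K}]_(a, b) :=
  \matrix_(i, j) ((A0 i j)%:P + (A1 i j - A0 i j) *: 'X).
Definition ptM a b (A0 A1 : 'M[K]_(a, b)) (t : K) : 'M[K]_(a, b) :=
  \matrix_(i, j) (A0 i j + (A1 i j - A0 i j) * t).

Lemma map_lineM a b (A0 A1 : 'M[K]_(a, b)) t :
  map_mx (horner_eval t) (lineM A0 A1) = ptM A0 A1 t.
Proof. by apply/matrixP => i j; rewrite !mxE /horner_eval !hornerE. Qed.

Lemma ptM0 a b (A0 A1 : 'M[K]_(a, b)) : ptM A0 A1 0 = A0.
Proof. by apply/matrixP => i j; rewrite !mxE mulr0 addr0. Qed.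

Lemma ptM1 a b (A0 A1 : 'M[K]_(a, b)) : ptM A0 A1 1 = A1.
Proof. by apply/matrixP => i j; rewrite !mxE mulr1 addrC subrK. Qed.

Variables (m l s k : nat) (r : 'I_m -> nat).
Local Notation n := (\sum_(i < m) (l + r i))%N.
Local Notation RR := (\sum_(i < m) r i)%N.

Definition DetG (f : 'I_k -> 'I_n) (a : 'M[K]_(k, s)) (b : 'M[K]_(l, RR)) : K :=
  \det (colsub f (@Gmat K m l s k r a b)).

Lemma common_point (P : pred {ffun 'I_k -> 'I_n}) :
  (forall f, P f -> exists a b, DetG f a b != 0) ->
  exists a b, forall f, P f -> DetG f a b != 0.
Proof.
move=> Hw.
suff /(_ (enum {ffun 'I_k -> 'I_n})) [a [b Hab]] : forall sq : seq {ffun 'I_k -> 'I_n},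
    exists a b, forall f, f \in sq -> P f -> DetG f a b != 0.
  by exists a, b => f Pf; apply: (Hab f) => //; rewrite mem_enum.
elim => [|f sq [a0 [b0 IH]]]; first by exists 0, 0.
case Pf: (P f); last first.
  exists a0, b0 => g; rewrite inE => /orP[/eqP -> |]; first by rewrite Pf.
  exact: IH.
have [a1 [b1 H1]] := Hw f Pf.
pose u g := \det (colsub g (@GmatR _ m l s k r (lineM a0 a1) (lineM b0 b1))).
have ueval g t : (u g).[t] = DetG g (ptM a0 a1 t) (ptM b0 b1 t).
  rewrite /u /DetG -[_.[t]]/(horner_eval t _) -det_map_mx map_colsub map_GmatR.
  by rewrite !map_lineM.
pose q := \prod_(g <- f :: sq | P g) u g.
have q0 : q != 0.
  rewrite prodf_seq_neq0; apply/allP => g gin; apply/implyP => Pg.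
  apply/eqP => ug0.
  move: gin; rewrite inE => /orP[/eqP eg|gin].
    by move: H1; rewrite -eg -(ptM1 a0 a1) -(ptM1 b0 b1) -ueval ug0 horner0 eqxx.
  by move: (IH g gin Pg); rewrite -(ptM0 a0 a1) -(ptM0 b0 b1) -ueval ug0 horner0 eqxx.
have [t qt] := exists_nonroot q0.
exists (ptM a0 a1 t), (ptM b0 b1 t) => g gin Pg.
move: qt; rewrite /q horner_prod prodf_seq_neq0 => /allP /(_ g gin).
by rewrite Pg /= ueval.
Qed.
End Line.

Lemma pick_inj (T : finType) (A : {set T}) d : (d <= #|A|)%N ->
  exists g : 'I_d -> T, injective g /\ forall j, g j \in A.
Proof.
case: d => [|d] hd.
  have g0 : 'I_0 -> T by case=> j; rewrite ltn0.
  by exists g0; split => [[]|[]].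
have [x0 _] : exists x0, x0 \in A.
  by apply/set0Pn; rewrite -card_gt0; apply: leq_trans hd.
have sz : size (enum A) = #|A| by rewrite cardE.
exists (fun j => nth x0 (enum A) j); split.
  move=> i j /eqP; rewrite nth_uniq ?enum_uniq ?sz //; last by apply: leq_trans hd.
    by move/eqP/val_inj.
  by apply: leq_trans hd.
by move=> j; rewrite -mem_enum mem_nth // sz; apply: leq_trans hd.
Qed.

Section MDS.
Variable F : fieldType.

Lemma supp_sub a n0 (M : 'M[F]_(a, n0)) (S : {set 'I_n0}) (v : 'rV_n0) :
  (forall w j, j \notin S -> M w j = 0) -> (v <= M)%MS ->
  forall j, j \notin S -> v 0 j = 0.
Proof.
move=> HM /submxP [u ->] j jS; rewrite mxE big1 // => w _.
by rewrite HM // mulr0.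
Qed.

Lemma mds_crit a n0 (M : 'M[F]_(a, n0)) (S : {set 'I_n0}) kk :
  (0 < kk)%N -> (kk <= #|S|)%N ->
  (forall w j, j \notin S -> M w j = 0) ->
  \rank M = kk ->
  (forall g : 'I_kk -> 'I_n0, injective g -> (forall j, g j \in S) ->
     forall v : 'rV_n0, (v <= M)%MS -> (forall j, v 0 (g j) = 0) -> v = 0) ->
  is_MDS M #|S| kk.
Proof.
move=> kk0 kkS HM rM Hlow; split => //.
have LB : forall v : 'rV_n0, (v <= M)%MS -> v != 0 -> (#|S| - kk + 1 <= wt v)%N.
  move=> v vM v0; rewrite leqNgt; apply/negP => hw.
  pose Z := S :\: [set j | v 0 j != 0].
  have suppS : [set j | v 0 j != 0] \subset S.
    apply/subsetP => j; rewrite inE; apply: contraR => jS.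
    by rewrite (supp_sub HM vM jS) eqxx.
  have cZ : (kk <= #|Z|)%N.
    rewrite cardsD (setIidPr suppS); move: hw; rewrite /wt.
    have := subset_leq_card suppS; move: kkS; set x1 := #|S|; set x2 := #|[set j | _]|; lia.
  have [g [ig gZ]] := pick_inj cZ.
  move/eqP: v0; apply; apply: (Hlow g ig) => // [j|j].
    by have := gZ j; rewrite inE => /andP[].
  by have := gZ j; rewrite !inE => /andP[]; rewrite negbK => /eqP.
split => //.
have [g [ig gS]] := pick_inj kkS.
pose B := row_base M.
pose Q := colsub g B.
have fQ : row_free Q.
  apply: inj_row_free => w wQ.
  have : w *m B = 0.
    apply: (Hlow g ig gS).
      by rewrite (submx_trans (submxMl _ _)) // eq_row_base.
    by move=> j; move/rowP: wQ => /(_ j); rewrite mulmx_colsub mxE => ->; rewrite mxE.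
  by rewrite -(mul0mx _ B) => /(row_free_inj (row_base_free M)).
have fullQ : row_full Q by rewrite /row_full (eqP fQ) rM.
have hj0 : (kk.-1 < kk)%N by rewrite ltn_predL.
pose j0 := Ordinal hj0.
have /submxP [w ew] : ((delta_mx 0 j0 : 'rV[F]_kk) <= Q)%MS by apply: (submx_full _ fullQ).
pose c := w *m B.
have cg j : c 0 (g j) = (j == j0)%:R.
  move/rowP: ew => /(_ j); rewrite mulmx_colsub !mxE => <-.
  by rewrite eqxx /= eq_sym.
have cM : (c <= M)%MS by rewrite (submx_trans (submxMl _ _)) // eq_row_base.
have c0 : c != 0.
  by apply/eqP => /rowP /(_ (g j0)); rewrite cg eqxx mxE => /eqP; rewrite oner_eq0.
exists c; do 2!split => //; apply/eqP; rewrite eqn_leq (LB c cM c0) andbT.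
pose X := g @: [set~ j0].
have XS : X \subset S by apply/subsetP => x /imsetP [j _ ->].
have cX : #|X| = kk.-1.
  by rewrite card_imset // cardsC1 card_ord.
have : [set j | c 0 j != 0] \subset S :\: X.
  apply/subsetP => j; rewrite !inE => cj; apply/andP; split.
    apply/negP => /imsetP [j1]; rewrite !inE => jj1 ej.
    by move: cj; rewrite ej cg (negbTE jj1) eqxx.
  by apply: contraR cj => jS; rewrite (supp_sub HM cM jS) eqxx.
move/subset_leq_card; rewrite cardsD (setIidPr XS) cX /wt.
move: kk0 kkS; set x1 := #|S|; set x2 := #|[set j | _]|; lia.
Qed.
End MDS.

Lemma is_MDS_eqmx (F : fieldType) a1 a2 n0 (A : 'M[F]_(a1, n0)) (B : 'M[F]_(a2, n0))
  len kk : (A :=: B)%MS -> is_MDS B len kk -> is_MDS A len kk.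
Proof.
move=> eAB [rB [[c [cB [c0 wc]]] HB]]; split; first by rewrite eAB.
split; first by exists c; rewrite eAB.
by move=> v; rewrite eAB; apply: HB.
Qed.

Definition injf (X Y : finType) (y0 : Y) (A : {set X}) (B : {set Y}) (x : X) : Y :=
  nth y0 (enum B) (index x (enum A)).

Lemma injf_mem (X Y : finType) (y0 : Y) (A : {set X}) (B : {set Y}) :
  (#|A| <= #|B|)%N -> forall x, x \in A -> injf y0 A B x \in B.
Proof.
move=> cAB x xA; rewrite /injf -mem_enum mem_nth // -cardE.
by apply: leq_trans cAB; rewrite cardE index_mem mem_enum.
Qed.

Lemma injf_inj (X Y : finType) (y0 : Y) (A : {set X}) (B : {set Y}) :
  (#|A| <= #|B|)%N -> forall x x', x \in A -> x' \in A ->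
  injf y0 A B x = injf y0 A B x' -> x = x'.
Proof.
move=> cAB x x' xA x'A; rewrite /injf => /eqP.
have lt z : z \in A -> (index z (enum A) < size (enum B))%N.
  by move=> zA; rewrite -cardE; apply: leq_trans cAB; rewrite cardE index_mem mem_enum.
rewrite nth_uniq ?enum_uniq ?lt // => /eqP e.
by rewrite -[x](@nth_index _ x x (enum A)) ?mem_enum // e nth_index ?mem_enum.
Qed.

Lemma Pent_lt (F : fieldType) k s (a : 'M[F]_(k, s)) w c :
  (c < k)%N -> Pent a w c = (w == c :> nat)%:R.
Proof.
move=> ck; rewrite /Pent; case: insubP => [c' _ vc|]; last first.
  by move=> /negP []; apply: leq_trans ck (leq_addr _ _).
rewrite mxE; case: splitP => [j ej|j ej]; first by rewrite mxE; move: vc; rewrite /= ej => <-.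
by move: vc; rewrite /= ej => vc; move: ck; rewrite -vc; lia.
Qed.

Lemma Pent_ge (F : fieldType) k s (a : 'M[F]_(k, s)) w (z : 'I_s) :
  Pent a w (k + z) = a w z.
Proof.
rewrite /Pent; case: insubP => [c' _ vc|]; last by rewrite ltn_add2l ltn_ord.
rewrite mxE; case: splitP => [j ej|j ej].
  by move: (ltn_ord j); rewrite -ej vc; lia.
by congr (a w _); apply: val_inj; move: ej; rewrite vc /=; lia.
Qed.

Lemma alpha_witness (F : fieldType) k s (pi : 'I_k -> nat) :
  injective pi -> (forall j, pi j < k + s)%N ->
  exists a : 'M[F]_(k, s), \det (\matrix_(w, j) Pent a w (pi j)) != 0.
Proof.
move=> ipi pks.
case: (posnP k) => [k0|kpos].
  by exists 0; subst k; rewrite det_mx00 oner_eq0.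
pose w0 := Ordinal kpos.
pose A := [set j | ~~ (pi j < k)%N].
pose Jset := [set w : 'I_k | [exists j, pi j == w]].
pose g (j : 'I_k) := insubd w0 (pi j) : 'I_k.
have cJ : (#|Jset| <= #|[set j | (pi j < k)%N]|)%N.
  apply: leq_trans (leq_imset_card g _); apply: subset_leq_card.
  apply/subsetP => w; rewrite inE => /existsP [j /eqP e].
  apply/imsetP; exists j; first by rewrite inE e ltn_ord.
  by apply: val_inj; rewrite val_insubd e ltn_ord.
have cA : (#|A| <= #|~: Jset|)%N.
  have c1 := cardsC Jset.
  have c2 := cardsC [set j | (pi j < k)%N].
  have eA : ~: [set j | (pi j < k)%N] = A by apply/setP => j; rewrite !inE.
  rewrite eA card_ord in c2; rewrite card_ord in c1.
  move: c1 c2 cJ; set x1 := #|Jset|; set x2 := #|A|; set x3 := #|[set j | _]|.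
  set x4 := #|~: Jset|; lia.
pose h := injf w0 A (~: Jset).
pose a : 'M[F]_(k, s) := \matrix_(w, z) [exists j, (pi j == k + z)%N && (h j == w)]%:R.
pose th j := if (pi j < k)%N then g j else h j.
have thE w j : Pent a w (pi j) = (w == th j)%:R.
  rewrite /th; case: ifP => pk.
    by rewrite Pent_lt // -val_eqE /g val_insubd pk.
  have zs : (pi j - k < s)%N by have := pks j; move: pk; lia.
  have -> : pi j = (k + Ordinal zs)%N by rewrite /=; move: pk; lia.
  rewrite Pent_ge mxE; set b1 := [exists _, _]; suff -> : b1 = (w == h j) by [].
  rewrite /b1; apply/idP/idP => [/existsP [j' /andP [/eqP e /eqP <-]]|/eqP ->].
    have -> // : j' = j by apply: ipi; rewrite e /=; move: pk; lia.
  by apply/existsP; exists j; rewrite eqxx andbT /=; apply/eqP; move: pk; lia.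
have ith : injective th.
  move=> j1 j2; rewrite /th; case: ifP => p1; case: ifP => p2.
  - by move/(congr1 val); rewrite !val_insubd p1 p2 => /ipi.
  - move=> e; have : h j2 \in ~: Jset by apply: injf_mem; rewrite // inE p2.
    rewrite -e inE => /negP []; rewrite inE; apply/existsP; exists j1.
    by rewrite /g val_insubd p1.
  - move=> e; have : h j1 \in ~: Jset by apply: injf_mem; rewrite // inE p1.
    rewrite e inE => /negP []; rewrite inE; apply/existsP; exists j2.
    by rewrite /g val_insubd p2.
  - by apply: injf_inj; rewrite // inE ?p1 ?p2.
exists a.
have -> : \matrix_(w, j) Pent a w (pi j) = (perm_mx (perm ith))^T.
  by apply/matrixP => w j; rewrite !mxE thE permE eq_sym.
by rewrite det_tr det_perm signr_eq0.
Qed.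

Section Main.
Variable K : closedFieldType.
Variables (m l s k : nat) (r : 'I_m -> nat).
Local Notation n := (\sum_(i < m) (l + r i))%N.
Local Notation RR := (\sum_(i < m) r i)%N.
Local Notation N := (k * s + l * RR)%N.

Local Notation Det := (@DetG K m l s k r).

Definition blk (x : 'I_n) : 'I_m := tag (@tagnat.sig m (fun i => (l + r i)%N) x).

Definition Good (f : {ffun 'I_k -> 'I_n}) : bool :=
  injectiveb f && [forall i : 'I_m, #|[set j | blk (f j) == i]| <= l]%N.

Hypotheses (hm : (2 <= m)%N) (hs : (1 <= s)%N) (hl : (1 <= l)%N)
  (hr : forall i, (1 <= r i)%N) (hk : k = (m * l - s)%N) (hlk : (l <= k)%N).

Definition Rk (i : 'I_m) (j : 'I_(l + r i)) : 'I_n :=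
  @tagnat.Rank m (fun i => (l + r i)%N) i j.
Arguments Rk i j : clear implicits.

Lemma blk_Rk i j : blk (Rk i j) = i.
Proof. exact: tagnat.Rank1K. Qed.

Lemma Rk_ind (P : 'I_n -> Prop) : (forall i j, P (Rk i j)) -> forall x, P x.
Proof. by move=> H x; rewrite -(tagnat.sig2K x); apply: H. Qed.

Lemma Rk_inj i : injective (@Rk i).
Proof.
move=> j j' e; have := congr1 (@tagnat.sig m (fun i => (l + r i)%N)) e.
rewrite /Rk /tagnat.Rank !tagnat.rankK; exact: eq_from_Tagged.
Qed.

Lemma Gentry a b w i j :
  (@Gmat K m l s k r a b) w (Rk i j) = row_mx (@Cblk K m l s k a i) (@Dblk K m l s k r a b i) w j.
Proof.
have := congr1 (fun M : 'M[K]_(k, l + r i) => M w j) (@mxrowK _ m (fun i => (l + r i)%N) k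
   (fun i => row_mx (@Cblk K m l s k a i) (@Dblk K m l s k r a b i)) i).
by rewrite /= [in LHS]mxE.
Qed.

Definition cnt (T : {set 'I_n}) (i : 'I_m) : nat := (\sum_(y in T) (blk y == i))%N.
Definition blockok (T : {set 'I_n}) := forall i, (cnt T i <= l)%N.

Lemma card_cnt (T : {set 'I_n}) : #|T| = (\sum_i cnt T i)%N.
Proof.
rewrite /cnt exchange_big /= -sum1_card; apply: eq_bigr => y _.
rewrite (bigD1 (blk y)) //= eqxx big1 // => i /negbTE; rewrite eq_sym => ->.
by [].
Qed.

Lemma cnt_U1 x (T : {set 'I_n}) i : x \notin T -> cnt (x |: T) i = ((blk x == i) + cnt T i)%N.
Proof. by move=> xT; rewrite /cnt big_setU1. Qed.

Lemma cnt_sub (T T' : {set 'I_n}) i : T \subset T' -> (cnt T i <= cnt T' i)%N.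
Proof.
move=> sT; rewrite /cnt [X in (_ <= X)%N](big_setID T) /= (setIidPr sT).
exact: leq_addr.
Qed.

Lemma cnt_Rk i (A : {set 'I_(l + r i)}) : cnt (Rk i @: A) i = #|A|.
Proof.
rewrite /cnt big_imset /=; last by move=> x y _ _; apply: Rk_inj.
by rewrite -sum1_card; apply: eq_bigr => j _; rewrite blk_Rk eqxx.
Qed.

Lemma cnt_Rk_ne i i' (A : {set 'I_(l + r i)}) : i' != i -> cnt (Rk i @: A) i' = 0%N.
Proof.
move=> ne; rewrite /cnt big_imset /=; last by move=> x y _ _; apply: Rk_inj.
by rewrite big1 // => j _; rewrite blk_Rk eq_sym (negbTE ne).
Qed.

Lemma cnt_block (i : 'I_m) : (l <= cnt setT i)%N.
Proof.
apply: leq_trans (cnt_sub i (subsetT (Rk i @: setT))).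
by rewrite cnt_Rk cardsT card_ord leq_addr.
Qed.

Lemma km : (k <= m * l)%N.
Proof. by rewrite hk leq_subr. Qed.

Lemma extend (T0 : {set 'I_n}) : blockok T0 -> (#|T0| <= k)%N ->
  exists T : {set 'I_n}, [/\ T0 \subset T, #|T| = k & blockok T].
Proof.
move=> ok0 c0; move: {2}(k - #|T0|)%N (erefl (k - #|T0|)%N) => d.
elim: d T0 ok0 c0 => [|d IH] T0 ok0 c0 ed.
  by exists T0; split => //; apply/eqP; rewrite eqn_leq c0 /= -subn_eq0 ed.
have [i ci] : exists i, (cnt T0 i < l)%N.
  apply/existsP; apply: contraT => /existsPn H.
  have : (m * l <= #|T0|)%N.
    have -> : (m * l = \sum_(i < m) l)%N by rewrite sum_nat_const card_ord.
    rewrite card_cnt; apply: leq_sum => i _.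
    by rewrite leqNgt H.
  move: ed km; lia.
have [x xT0 bx] : exists2 x, x \notin T0 & blk x == i.
  apply/exists_inP; apply: contraLR ci => /exists_inPn H; rewrite -leqNgt.
  apply: leq_trans (cnt_block i) _; rewrite /cnt [X in (X <= _)%N](big_setID T0) /=.
  rewrite [X in (_ + X)%N]big1 ?addn0.
    by rewrite setTI.
  move=> y; rewrite !inE /= andbT => yT; have := H y yT.
  by case: (blk y == i).
have ok1 : blockok (x |: T0).
  move=> i'; rewrite cnt_U1 //; case: (eqVneq (blk x) i') => [<-|_].
    by rewrite (eqP bx) add1n.
  exact: ok0.
have c1 : (#|x |: T0| <= k)%N by rewrite cardsU1 xT0; move: ed; lia.
have e1 : (k - #|x |: T0|)%N = d by rewrite cardsU1 xT0; move: ed; lia.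
have [T [sT cT okT]] := IH (x |: T0) ok1 c1 e1.
by exists T; split => //; apply: subset_trans sT; apply: subsetUr.
Qed.

Lemma card_pred_sum (T : finType) (P : pred T) : #|[set x | P x]| = (\sum_x P x)%N.
Proof.
rewrite -sum1_card big_mkcond /=; apply: eq_bigr => x _; rewrite inE.
by case: (P x).
Qed.

Lemma good_of_set (T : {set 'I_n}) : #|T| = k -> blockok T ->
  exists f : {ffun 'I_k -> 'I_n}, [/\ Good f, forall j, f j \in T &
     forall x, x \in T -> exists j, f j = x].
Proof.
move=> cT okT.
have [g [ig gT]] := pick_inj (eq_leq (esym cT)).
pose f := [ffun j => g j].
have fE j : f j = g j by rewrite ffunE.
have img : f @: setT = T.
  apply/eqP; rewrite eqEcard cT card_imset ?cardsT ?card_ord ?leqnn ?andbT.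
    by apply/subsetP => x /imsetP [j _ ->]; rewrite fE.
  by move=> i j; rewrite !fE => /ig.
exists f; split.
- apply/andP; split; first by apply/injectiveP => i j; rewrite !fE => /ig.
  apply/forallP => i; rewrite card_pred_sum.
  apply: leq_trans (okT i); rewrite -img /cnt big_imset /=.
    by under [X in (_ <= X)%N]eq_bigl do rewrite inE.
  by move=> x y _ _; rewrite !fE => /ig.
- by move=> j; rewrite fE.
- by move=> x; rewrite -img => /imsetP [j _ ->]; exists j.
Qed.

Section Dets.
Variables (a : 'M[K]_(k, s)) (b : 'M[K]_(l, RR)).
Hypothesis Hd : forall f, Good f -> Det f a b != 0.
Local Notation G := (@Gmat K m l s k r a b).

Lemma rows_indep (T : {set 'I_n}) : #|T| = k -> blockok T ->
  forall u : 'rV[K]_k, (forall x, x \in T -> (u *m G) 0 x = 0) -> u = 0.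
Proof.
move=> cT okT u Hu.
have [f [Gf fT _]] := good_of_set cT okT.
have uf : row_free (colsub f G).
  by rewrite row_free_unit unitmxE unitfE; apply: Hd.
apply: (row_free_inj uf); rewrite mul0mx mulmx_colsub.
by apply/rowP => j; rewrite [RHS]mxE -(Hu (f j) (fT j)) !mxE.
Qed.

Lemma colind d (g : 'I_d -> 'I_n) : injective g -> blockok (g @: setT) ->
  (d <= k)%N -> \rank (colsub g G) = d.
Proof.
move=> ig okg dk.
have cg : #|g @: setT| = d by rewrite card_imset // cardsT card_ord.
have cg' : (#|g @: setT| <= k)%N by rewrite cg.
have [T [sT cT okT]] := extend okg cg'.
have [f [Gf fT fsurj]] := good_of_set cT okT.
have hex j : exists i, f i == g j.
  have [i <-] := fsurj (g j) (subsetP sT _ (imset_f _ (in_setT j))).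
  by exists i.
pose h j := xchoose (hex j).
have hE j : f (h j) = g j by apply/eqP; apply: (xchooseP (hex j)).
have ih : injective h by move=> i j e; apply: ig; rewrite -!hE e.
have -> : colsub g G = colsub f G *m colsub h 1%:M.
  by rewrite mulmx_colsub mulmx1; apply/matrixP => i j; rewrite !mxE hE.
have uf : row_full (colsub f G).
  by rewrite row_full_unit unitmxE unitfE; apply: Hd.
rewrite (eqmxMfull _ uf); apply/eqP; rewrite eqn_leq rank_leq_col /=.
have e1 : rowsub h 1%:M *m colsub h 1%:M = (1%:M : 'M[K]_d).
  apply/matrixP => i j; rewrite mul_rowsub_mx mul1mx !mxE.
  by rewrite (inj_eq ih).
apply: leq_trans (mxrankM_maxr (rowsub h 1%:M) (colsub h 1%:M)).
by rewrite e1 mxrank1.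
Qed.

Lemma Dblk_mul i : @Dblk K m l s k r a b i = @Cblk K m l s k a i *m submxrow b i.
Proof. by apply/matrixP => w j; rewrite !mxE; apply: eq_bigr => t _; rewrite mulrC. Qed.

Lemma cnt_eq (T T' : {set 'I_n}) i :
  (forall y, blk y = i -> (y \in T) = (y \in T')) -> cnt T i = cnt T' i.
Proof.
move=> H; rewrite /cnt [LHS]big_mkcond [RHS]big_mkcond /=; apply: eq_bigr => y _.
case: (eqVneq (blk y) i) => [e|ne]; first by rewrite (H y e).
by case: (y \in T); case: (y \in T').
Qed.

Lemma local_mds i : is_MDS (submxrow G i) (l + r i) l.
Proof.
pose C := @Cblk K m l s k a i.
pose N := (row_mx 1%:M (submxrow b i) : 'M[K]_(l, l + r i)).
have HG : submxrow G i = C *m N.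
  by rewrite /G mxrowK Dblk_mul mul_mx_row mulmx1.
have Hloc (g : 'I_l -> 'I_(l + r i)) : injective g -> \rank (C *m colsub g N) = l.
  move=> ig; rewrite mulmx_colsub -HG.
  have -> : colsub g (submxrow G i) = colsub (fun j => Rk i (g j)) G.
    by apply/matrixP => w j; rewrite !mxE.
  apply: colind => //.
  - by move=> x y /Rk_inj /ig.
  - move=> i'; rewrite (imset_comp (Rk i) g).
    case: (eqVneq i' i) => [->|ne]; last by rewrite cnt_Rk_ne.
    by rewrite cnt_Rk card_imset // cardsT card_ord.
have Hfull (g : 'I_l -> 'I_(l + r i)) : injective g -> row_full C /\ row_free (colsub g N).
  move=> ig; have := Hloc g ig => e; split.
    by rewrite /row_full eqn_leq rank_leq_col /= -{1}e mxrankM_maxl.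
  by rewrite /row_free eqn_leq rank_leq_row /= -{1}e mxrankM_maxr.
have cS : (l <= #|[set: 'I_(l + r i)]|)%N by rewrite cardsT card_ord leq_addr.
have [g0 [ig0 _]] := pick_inj cS.
have fullC := (Hfull g0 ig0).1.
rewrite HG; apply: (is_MDS_eqmx (eqmxMfull _ fullC)).
have := @mds_crit K l (l + r i) N setT l hl cS; rewrite cardsT card_ord; apply.
- by move=> w j; rewrite inE.
- apply/eqP; rewrite eqn_leq rank_leq_row /=.
  rewrite -{1}(Hloc g0 ig0); apply: leq_trans (mxrankM_maxr _ _) _.
  have -> : colsub g0 N = N *m colsub g0 1%:M by rewrite mulmx_colsub mulmx1.
  exact: mxrankM_maxl.
- move=> g ig _ v /submxP [w ->] Hv.
  have fr := (Hfull g ig).2.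
  have : w *m colsub g N = 0.
    by rewrite mulmx_colsub; apply/rowP => j; rewrite mxE [RHS]mxE Hv.
  by rewrite -(mul0mx _ (colsub g N)) => /(row_free_inj fr) ->; rewrite mul0mx.
Qed.


Lemma rank_G_k (M : 'M[K]_(k, n)) (T : {set 'I_n}) :
  #|T| = k -> blockok T -> (forall x, x \in T -> forall w, M w x = G w x) ->
  \rank M = k.
Proof.
move=> cT okT HM; apply/eqP; apply: inj_row_free => u uM.
apply: (rows_indep cT okT) => x xT.
rewrite !mxE -[RHS](_ : (u *m M) 0 x = 0); last by rewrite uM mxE.
by rewrite mxE; apply: eq_bigr => w _; rewrite HM.
Qed.

Lemma punct_mds (E : forall i : 'I_m, {set 'I_(l + r i)}) :
  (forall i, #|E i| = r i) ->
  is_MDS (\mxrow_(i < m) keep_cols (~: E i) (submxrow G i)) (m * l) k.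
Proof.
move=> HE.
set Mp := \mxrow_(i < m) _.
pose SE := \bigcup_(i < m) (Rk i @: ~: E i).
have inSE i j : (Rk i j \in SE) = (j \in ~: E i).
  apply/bigcupP/idP => [[i' _ /imsetP [j' jE e]]|jE]; last first.
    by exists i => //; apply: imset_f.
  have ei : i = i' by rewrite -(blk_Rk j) e blk_Rk.
  by subst i'; move/Rk_inj: e => ->.
have MpE w i j : Mp w (Rk i j) = if j \in ~: E i then G w (Rk i j) else 0.
  have := congr1 (fun M : 'M[K]_(k, l + r i) => M w j) (@mxrowK _ m (fun i => (l + r i)%N) k
   (fun i => keep_cols (~: E i) (submxrow G i)) i).
  by rewrite /= [in LHS]mxE => ->; rewrite mxE mxE.
have Mout w x : x \notin SE -> Mp w x = 0.
  by move: x; apply: Rk_ind => i j; rewrite inSE MpE => /negbTE ->.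
have Min w x : x \in SE -> Mp w x = G w x.
  by move: x; apply: Rk_ind => i j; rewrite inSE MpE => ->.
have cntSE i : cnt SE i = l.
  rewrite (@cnt_eq SE (Rk i @: ~: E i)); last first.
    move=> y; move: y; apply: Rk_ind => i' j; rewrite blk_Rk => ei; subst i'.
    by rewrite inSE mem_imset //; apply: Rk_inj.
  by rewrite cnt_Rk cardsCs setCK HE card_ord addnK.
have cSE : #|SE| = (m * l)%N.
  rewrite card_cnt (eq_bigr (fun _ => l)); last by move=> i _; rewrite cntSE.
  by rewrite sum_nat_const card_ord.
have okSub (T : {set 'I_n}) : T \subset SE -> blockok T.
  by move=> sT i; rewrite -(cntSE i); apply: cnt_sub.
have kSE : (k <= #|SE|)%N by rewrite cSE km.
have [g0 [ig0 g0S]] := pick_inj kSE.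
have T0sub : g0 @: setT \subset SE by apply/subsetP => x /imsetP [j _ ->].
have cT0 : #|g0 @: setT| = k by rewrite card_imset // cardsT card_ord.
have k0 : (0 < k)%N by apply: leq_trans hlk.
have := @mds_crit K k n Mp SE k k0 kSE; rewrite cSE; apply.
- by move=> w x; apply: Mout.
- by apply: (rank_G_k cT0 (okSub _ T0sub)) => x /(subsetP T0sub) xS w; apply: Min.
- move=> g ig gS v /submxP [u ->] Hv.
  have Tsub : g @: setT \subset SE by apply/subsetP => x /imsetP [j _ ->].
  have cT : #|g @: setT| = k by rewrite card_imset // cardsT card_ord.
  suff -> : u = 0 by rewrite mul0mx.
  apply: (rows_indep cT (okSub _ Tsub)) => x /imsetP [j _ ->].
  rewrite -(Hv j) !mxE; apply: eq_bigr => w _; rewrite Min //.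
Qed.

Lemma pmds_G : @is_PMDS K m l k r G.
Proof.
have ok0 : blockok set0 by move=> i; rewrite /cnt big_pred0 // => x; rewrite inE.
have c00 : (#|(set0 : {set 'I_n})| <= k)%N by rewrite cards0.
have [T [_ cT okT]] := extend ok0 c00.
split.
- exact: (rank_G_k cT okT).
- rewrite hk; apply: leq_trans (_ : (m * l <= n)%N).
    by rewrite ltn_subrL hs /= muln_gt0 hl andbT; apply: leq_trans hm.
  have -> : (m * l = \sum_(i < m) l)%N by rewrite sum_nat_const card_ord.
  by apply: leq_sum => i _; apply: leq_addr.
- exact: local_mds.
- exact: punct_mds.
Qed.
End Dets.

Lemma Rk_surj x : exists i (t : 'I_(l + r i)), x = Rk i t.
Proof. by move: x; apply: Rk_ind => i t; exists i, t. Qed.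

Lemma witness f : Good f -> exists a b, Det f a b != 0.
Proof.
case/andP => /injectiveP fi /forallP fc.
pose img := f @: setT.
pose t0 : 'I_l := Ordinal hl.
pose Ti i := [set t : 'I_(l + r i) | Rk i t \in img].
pose Ai i := [set t : 'I_(l + r i) | (l <= t)%N && (Rk i t \in img)].
pose Ci i := [set t' : 'I_l | Rk i (lshift (r i) t') \in img].
pose hh i := injf t0 (Ai i) (~: Ci i).
pose sg i (t : 'I_(l + r i)) : 'I_l :=
  match split t with inl t' => t' | inr _ => hh i t end.
have cTi i : (#|Ti i| <= l)%N.
  have := fc i; rewrite card_pred_sum => H.
  have e1 : cnt img i = (\sum_j (blk (f j) == i))%N.
    rewrite /cnt big_imset /=; last by move=> x y _ _ /fi.
    by apply: eq_bigl => j; rewrite inE.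
  have sub : Rk i @: Ti i \subset img.
    by apply/subsetP => x /imsetP [t]; rewrite inE => ti ->.
  by rewrite -cnt_Rk; apply: leq_trans (cnt_sub i sub) _; rewrite e1.
have cAB i : (#|Ai i| <= #|~: Ci i|)%N.
  have c1 := cardsC (Ci i); rewrite card_ord in c1.
  have dis : Ai i :&: (lshift (r i) @: Ci i) = set0.
    apply/setP => t; rewrite !inE; apply/negP => /andP [/andP [lt _] /imsetP [t' _ et]].
    by move: lt; rewrite et /= leqNgt ltn_ord.
  have sub : Ai i :|: (lshift (r i) @: Ci i) \subset Ti i.
    apply/subsetP => t; rewrite !inE => /orP [/andP [_ ->] //|/imsetP [t' ]].
    by rewrite inE => ct ->.
  have c2 := cardsUI (Ai i) (lshift (r i) @: Ci i).
  rewrite dis cards0 addn0 card_imset in c2; last exact: lshift_inj.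
  have c3 := subset_leq_card sub.
  have c4 := cTi i.
  move: c1 c2 c3 c4; set x1 := #|Ci i|; set x2 := #|~: Ci i|; set x3 := #|Ai i|.
  set x4 := #|Ti i|; set x5 := #|_ :|: _|; lia.
have sg_inj i t1 t2 : t1 \in Ti i -> t2 \in Ti i -> sg i t1 = sg i t2 -> t1 = t2.
  have inA t (j : 'I_(r i)) : t \in Ti i -> t = rshift l j :> nat -> t \in Ai i.
    by rewrite !inE => -> e; rewrite e leq_addr.
  have inC t (t' : 'I_l) : t \in Ti i -> t = t' :> nat -> t' \in Ci i.
    rewrite !inE => ti e; suff <- : t = lshift (r i) t' by [].
    exact: val_inj.
  rewrite /sg; case: splitP => [a1 e1|b1 e1]; case: splitP => [a2 e2|b2 e2] t1T t2T.
  - by move=> e; apply: val_inj => /=; rewrite e1 e2 e.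
  - move=> e; have := injf_mem t0 (cAB i) (inA _ _ t2T e2).
    by rewrite -/(hh i) -e inE (inC _ _ t1T e1).
  - move=> e; have := injf_mem t0 (cAB i) (inA _ _ t1T e1).
    by rewrite -/(hh i) e inE (inC _ _ t2T e2).
  - by move=> e; apply: (injf_inj (cAB i) (inA _ _ t1T e1) (inA _ _ t2T e2) e).
pose b : 'M[K]_(l, RR) :=
  \mxrow_(i < m) (\matrix_(t, j) (t == sg i (rshift l j))%:R : 'M[K]_(l, r i)).
have sg_l i (t' : 'I_l) : sg i (lshift (r i) t') = t'.
  rewrite /sg; case: splitP => [a1 e1|b1 e1]; first by apply: val_inj => /=; rewrite -e1.
  by move: (ltn_ord t') e1 => /=; lia.
have sg_r i (j : 'I_(r i)) : sg i (rshift l j) = hh i (rshift l j).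
  rewrite /sg; case: splitP => [a1 e1|b1 e1] //.
  by move: (ltn_ord a1) e1 => /=; lia.
have Gcol a w i t : (@Gmat K m l s k r a b) w (Rk i t) = Pent a w (i * l + sg i t).
  rewrite Gentry; case: (splitP t) => [t' et|j et].
    have -> : t = lshift (r i) t' by apply: val_inj.
    by rewrite row_mxEl sg_l mxE.
  have -> : t = rshift l j by apply: val_inj.
  rewrite row_mxEr mxE (bigD1 (sg i (rshift l j))) //= big1 ?addr0.
    by rewrite /b mxrowK mxE eqxx mul1r mxE.
  move=> t'' ne; rewrite /b mxrowK mxE (negbTE ne) mul0r //.
pose col (x : 'I_n) := let p := @tagnat.sig m (fun i => (l + r i)%N) x in
  (tag p * l + sg (tag p) (tagged p))%N.
have colE i t : col (Rk i t) = (i * l + sg i t)%N.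
  by rewrite /col /Rk /tagnat.Rank tagnat.rankK.
pose pi j := col (f j).
have ksml : (k + s = m * l)%N.
  move: hk hlk hl; set ml := (m * l)%N; lia.
have pik j : (pi j < k + s)%N.
  rewrite /pi; case: (Rk_surj (f j)) => i [t ->]; rewrite colE ksml.
  apply: leq_trans (_ : (i.+1 * l <= m * l)%N); last by rewrite leq_mul2r ltn_ord orbT.
  by rewrite mulSn addnC; have := ltn_ord (sg i t); set y := nat_of_ord _; lia.
have ipi : injective pi.
  move=> j1 j2; rewrite /pi.
  have [i1 [t1 e1]] := Rk_surj (f j1); have [i2 [t2 e2]] := Rk_surj (f j2).
  rewrite e1 e2 !colE => e.
  have ei : i1 = i2.
    apply: val_inj => /=.
    have := congr1 (fun x => x %/ l)%N e => /=.
    by rewrite !divnMDl // !divn_small ?ltn_ord // !addn0.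
  subst i2; move/addnI/val_inj: e => e.
  have t1T : t1 \in Ti i1 by rewrite inE -e1; apply: imset_f.
  have t2T : t2 \in Ti i1 by rewrite inE -e2; apply: imset_f.
  by apply: fi; rewrite e1 e2 (sg_inj _ _ _ t1T t2T e).
have [a Ha] := @alpha_witness K k s pi ipi pik.
exists a, b; rewrite /DetG.
have -> : colsub f (@Gmat K m l s k r a b) = \matrix_(w, j) Pent a w (pi j).
  apply/matrixP => w j.
  have cE (A : 'M[K]_(k, n)) : colsub f A w j = A w (f j) by rewrite mxE.
  rewrite cE [RHS]mxE /pi.
  by case: (Rk_surj (f j)) => i [t ->]; rewrite Gcol colE.
exact: Ha.
Qed.


Lemma pmds_of_dets a b : (forall f, Good f -> Det f a b != 0) ->
  @is_PMDS K m l k r (@Gmat K m l s k r a b).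
Proof. by move=> H; apply: pmds_G. Qed.

Definition alphaX : 'M[{mpoly K[N]}]_(k, s) :=
  vec_mx (lsubmx (\row_j 'X_j : 'rV[{mpoly K[N]}]_N)).
Definition betaX : 'M[{mpoly K[N]}]_(l, RR) :=
  vec_mx (rsubmx (\row_j 'X_j : 'rV[{mpoly K[N]}]_N)).

Definition Pol : {mpoly K[N]} :=
  \prod_(f | Good f) \det (colsub f (@GmatR _ m l s k r alphaX betaX)).

Lemma PolE x : Pol.@[x] =
  \prod_(f | Good f) Det f (alpha_of x) (beta_of x).
Proof.
rewrite /Pol rmorph_prod; apply: eq_bigr => f _.
rewrite /DetG -det_map_mx map_colsub map_GmatR GmatE; congr (\det (colsub _ _)).
congr GmatR; apply/matrixP => i j; rewrite !mxE /= mevalXU //.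
Qed.

Lemma main_generic : generic_set (@A_PMDS K m l s k r).
Proof.
exists (fun x => Pol.@[x] != 0); split.
  by exists (fun f => f = Pol) => x; split => [H|[f [-> //]]]; exists Pol.
split.
  have [a [b Hab]] := @common_point K m l s k r Good witness.
  pose x := fun j : 'I_N => (row_mx (mxvec a) (mxvec b)) 0 j.
  have xa : alpha_of x = a.
    rewrite /alpha_of.
    have -> : \row_j x j = row_mx (mxvec a) (mxvec b) by apply/rowP => j; rewrite mxE.
    by rewrite row_mxKl mxvecK.
  have xb : beta_of x = b.
    rewrite /beta_of.
    have -> : \row_j x j = row_mx (mxvec a) (mxvec b) by apply/rowP => j; rewrite mxE.
    by rewrite row_mxKr mxvecK.
  exists x; rewrite PolE xa xb; apply/prodf_neq0 => f Gf; exact: Hab.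
move=> x; rewrite PolE => /prodf_neq0 H.
exact: pmds_of_dets.
Qed.
End Main.


Theorem theorem17 (K : closedFieldType) (p e q : nat) (m s l k : nat)
  (r : 'I_m -> nat) :
  prime p -> p \in [pchar K] -> (forall x : K, algebraic_over_prime x) ->
  (0 < e)%N -> q = (p ^ e)%N ->
  (2 <= m)%N -> (1 <= s)%N -> (1 <= l)%N -> (forall i, 1 <= r i)%N ->
  k = (m * l - s)%N -> (l <= k)%N ->
  generic_set (@A_PMDS K m l s k r).
Proof.
move=> _ _ _ _ _ hm hs hl _ hk hlk.
exact: (main_generic K r hm hs hl hk hlk).
Qed.
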